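(* Let $A\subseteq\omega$ be a c.e. set and $\epsilon$ a positive real number. Then $A$ has a computable subset $B$ such that $\underline{\rho}(B)>\underline{\rho}(A)-\epsilon$.
   Context: For $S\subseteq\omega$ and $n>0$, $\rho_n(S)=|S\cap[0,n)|/n$, and the lower density is $\underline{\rho}(S)=\liminf_n\rho_n(S)$. *)

(* Defs.v *)
From mathcomp Require Import all_boot all_order all_algebra.
From mathcomp Require Import all_classical all_reals all_analysis.
Set Implicit Arguments. Unset Strict Implicit. Unset Printing Implicit Defensive.
Import Order.TTheory GRing.Theory Num.Theory.

(* Untyped syntax; arguments are lists of naturals, missing arguments read as 0. *)
Inductive prf : Type :=
| PZero : prf
| PSucc : prf
| PProj : nat -> prf
| PComp : prf -> list prf -> prf
| PRec  : prf -> prf -> prf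
| PMu   : prf -> prf.

Inductive eval : prf -> list nat -> nat -> Prop :=
| eZero xs : eval PZero xs 0
| eSucc xs : eval PSucc xs (nth 0 xs 0).+1
| eProj i xs : eval (PProj i) xs (nth 0 xs i)
| eComp f gs xs ys y : evals gs xs ys -> eval f ys y -> eval (PComp f gs) xs y
| eRec0 f g xs y : eval f xs y -> eval (PRec f g) (0 :: xs) y
| eRecS f g n xs r y :
    eval (PRec f g) (n :: xs) r -> eval g (n :: r :: xs) y ->
    eval (PRec f g) (n.+1 :: xs) y
| eMu f xs y :
    eval f (y :: xs) 0 ->
    (forall z, (z < y)%N -> exists v, eval f (z :: xs) v.+1) ->
    eval (PMu f) xs y
with evals : list prf -> list nat -> list nat -> Prop :=
| esNil xs : evals nil xs nil
| esCons g gs xs y ys : eval g xs y -> evals gs xs ys -> evals (g :: gs) xs (y :: ys).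

Definition computable_set (S : set nat) : Prop :=
  exists p : prf, forall n, eval p [:: n] (if `[< S n >] then 1 else 0)%N.

Definition ce_set (S : set nat) : Prop :=
  exists p : prf, forall n, S n <-> exists y, eval p [:: n] y.

Local Open Scope ring_scope.

Definition rho (R : realType) (S : set nat) (n : nat) : R :=
  (\sum_(0 <= i < n) (`[< S i >] : nat)%:R) / n%:R.

Definition lower_density (R : realType) (S : set nat) : \bar R :=
  limn_einf (fun n => (rho R S n.+1)%:E).

(* Main.v *)
Require Import Defs.
From mathcomp Require Import all_boot all_order all_algebra.
From mathcomp Require Import all_classical all_reals all_analysis.
Import Defs.
Set Implicit Arguments. Unset Strict Implicit. Unset Printing Implicit Defensive.
Import Order.TTheory GRing.Theory Num.Theory.
Local Open Scope nat_scope.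

Fixpoint prec (h0 : nat) (hs : nat -> nat -> nat) (n : nat) : nat :=
  if n is n'.+1 then hs n' (prec h0 hs n') else h0.

Lemma eval_rec f g xs h0 hs :
  eval f xs h0 -> (forall i r, eval g (i :: r :: xs) (hs i r)) ->
  forall n, eval (PRec f g) (n :: xs) (prec h0 hs n).
Proof.
move=> Hf Hg; elim=> [|n IH] /=; first by constructor.
exact: eRecS IH (Hg _ _).
Qed.

Definition C1 f g := PComp f [:: g].
Definition C2 f g h := PComp f [:: g; h].

Lemma evalC1 f g xs a y : eval g xs a -> eval f [:: a] y -> eval (C1 f g) xs y.
Proof. by move=> Hg Hf; apply: eComp Hf; apply: esCons Hg (esNil _). Qed.
Lemma evalC2 f g h xs a b y : eval g xs a -> eval h xs b -> eval f [:: a; b] y ->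
  eval (C2 f g h) xs y.
Proof. by move=> Hg Hh Hf; apply: eComp Hf; apply: esCons Hg (esCons Hh (esNil _)). Qed.

Definition Pconst c := iter c (fun p => C1 PSucc p) PZero.
Arguments Pconst : simpl never.
Lemma eval_const c xs : eval (Pconst c) xs c.
Proof. elim: c => [|c IH] /=; first by constructor. exact: evalC1 IH (eSucc _). Qed.

Lemma eval_proj i xs y : y = nth 0 xs i -> eval (PProj i) xs y.
Proof. by move=> ->; constructor. Qed.

Lemma eval_succ xs y : y = (nth 0 xs 0).+1 -> eval PSucc xs y.
Proof. by move=> ->; constructor. Qed.

Lemma eval_eq p xs y y' : eval p xs y -> y = y' -> eval p xs y'.
Proof. by move=> H <-. Qed.

Definition Ppred := PRec PZero (PProj 0).
Lemma eval_pred x xs : eval Ppred (x :: xs) x.-1.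
Proof.
have := @eval_rec PZero (PProj 0) xs 0 (fun i r => i) (eZero _).
move=> /(_ (fun i r => eval_proj (erefl _))) /(_ x)=> H; apply: (eval_eq H); clear H.
by case: x.
Qed.

Definition Padd := PRec (PProj 0) (C1 PSucc (PProj 1)).
Lemma eval_add x y xs : eval Padd (x :: y :: xs) (x + y).
Proof.
have := @eval_rec (PProj 0) (C1 PSucc (PProj 1)) (y :: xs) y (fun i r => r.+1)
  (eval_proj (erefl _)).
move=> /(_ (fun i r => evalC1 (eval_proj (erefl _)) (eSucc _))) /(_ x).
move=> H; apply: (eval_eq H); clear H; elim: x => //= x ->; by rewrite addSn.
Qed.

Definition Pmul := PRec PZero (C2 Padd (PProj 1) (PProj 2)).
Lemma eval_mul x y xs : eval Pmul (x :: y :: xs) (x * y).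
Proof.
have := @eval_rec PZero (C2 Padd (PProj 1) (PProj 2)) (y :: xs) 0 (fun i r => r + y)
  (eZero _).
move=> /(_ (fun i r => evalC2 (eval_proj (erefl _)) (eval_proj (erefl _)) (eval_add _ _ _))) /(_ x).
move=> H; apply: (eval_eq H); clear H; elim: x => //= x ->; by rewrite mulSn addnC.
Qed.

Definition Psubr := PRec (PProj 0) (C1 Ppred (PProj 1)).
Lemma eval_subr y x xs : eval Psubr (y :: x :: xs) (x - y).
Proof.
have := @eval_rec (PProj 0) (C1 Ppred (PProj 1)) (x :: xs) x (fun i r => r.-1)
  (eval_proj (erefl _)).
move=> /(_ (fun i r => evalC1 (eval_proj (erefl _)) (eval_pred _ _))) /(_ y).
move=> H; apply: (eval_eq H); clear H; elim: y => /= [|y ->]; by rewrite ?subn0 ?subnS.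
Qed.

Definition Psg := PRec PZero (Pconst 1).
Lemma eval_sg x xs : eval Psg (x :: xs) (if x is 0 then 0 else 1).
Proof.
have := @eval_rec PZero (Pconst 1) xs 0 (fun i r => 1) (eZero _).
move=> /(_ (fun i r => eval_const _ _)) /(_ x)=> H; apply: (eval_eq H); clear H; by case: x.
Qed.

Definition Pisz := PRec (Pconst 1) PZero.
Lemma eval_isz x xs : eval Pisz (x :: xs) (if x is 0 then 1 else 0).
Proof.
have := @eval_rec (Pconst 1) PZero xs 1 (fun i r => 0) (eval_const _ _).
move=> /(_ (fun i r => eZero _)) /(_ x)=> H; apply: (eval_eq H); clear H; by case: x.
Qed.

Definition Pif c a b := C2 Padd (C2 Pmul (C1 Psg c) a) (C2 Pmul (C1 Pisz c) b).
Lemma eval_if c a b xs vc va vb :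
  eval c xs vc -> eval a xs va -> eval b xs vb ->
  eval (Pif c a b) xs (if vc is 0 then vb else va).
Proof.
move=> Hc Ha Hb.
apply: evalC2; [apply: evalC2; [exact: evalC1 Hc (eval_sg _ _)|exact: Ha|exact: eval_mul]
  |apply: evalC2; [exact: evalC1 Hc (eval_isz _ _)|exact: Hb|exact: eval_mul]|].
apply: (eval_eq (eval_add _ _ _)); clear; by case: vc; rewrite /= ?mul1n ?mul0n ?addn0.
Qed.

Definition Oadd a b := C2 Padd a b.
Definition Omul a b := C2 Pmul a b.
Definition Osub a b := C2 Psubr b a.
Definition Osg a := C1 Psg a.
Definition Oisz a := C1 Pisz a.
Definition Opred a := C1 Ppred a.

Lemma eval_Oadd a b xs va vb : eval a xs va -> eval b xs vb -> eval (Oadd a b) xs (va + vb).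
Proof. by move=> Ha Hb; apply: evalC2 Ha Hb (eval_add _ _ _). Qed.
Lemma eval_Omul a b xs va vb : eval a xs va -> eval b xs vb -> eval (Omul a b) xs (va * vb).
Proof. by move=> Ha Hb; apply: evalC2 Ha Hb (eval_mul _ _ _). Qed.
Lemma eval_Osub a b xs va vb : eval a xs va -> eval b xs vb -> eval (Osub a b) xs (va - vb).
Proof. by move=> Ha Hb; apply: evalC2 Hb Ha (eval_subr _ _ _). Qed.
Lemma eval_Osg a xs va : eval a xs va -> eval (Osg a) xs (if va is 0 then 0 else 1).
Proof. by move=> Ha; apply: evalC1 Ha (eval_sg _ _). Qed.
Lemma eval_Oisz a xs va : eval a xs va -> eval (Oisz a) xs (if va is 0 then 1 else 0).
Proof. by move=> Ha; apply: evalC1 Ha (eval_isz _ _). Qed.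
Lemma eval_Opred a xs va : eval a xs va -> eval (Opred a) xs va.-1.
Proof. by move=> Ha; apply: evalC1 Ha (eval_pred _ _). Qed.

Lemma evals_map_proj l xs : evals [seq PProj j | j <- l] xs [seq nth 0 xs j | j <- l].
Proof. by elim: l => [|j l IH] /=; [apply: esNil|apply: esCons IH; apply: eProj]. Qed.

Fixpoint allnz (vs : seq nat) : nat :=
  if vs is v :: vs' then (if v is 0 then 0 else allnz vs') else 1.

Fixpoint muiter (v : nat -> nat) (n : nat) : nat :=
  if n is n'.+1 then
    (if muiter v n' is 0 then
       (if v n' is 0 then 1 else if (v n').-1 is 0 then n'.+2 else 0)
     else muiter v n')
  else 0.

Fixpoint Fc (p : prf) (s : nat) (xs : seq nat) {struct p} : nat :=
  match p with
  | PZero => 1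
  | PSucc => (nth 0 xs 0).+2
  | PProj i => (nth 0 xs i).+1
  | PComp f gs => if allnz (map (fun g => Fc g s xs) gs) is 0 then 0
                  else Fc f s (map predn (map (fun g => Fc g s xs) gs))
  | PRec f g => if xs is n :: xs' then
       prec (Fc f s xs') (fun i r => if r is 0 then 0 else Fc g s (i :: r.-1 :: xs')) n
       else 0
  | PMu f => (muiter (fun z => Fc f s (z :: xs)) s).-1
  end.

Fixpoint Pallnz (qs : seq prf) : prf :=
  if qs is q :: qs' then Pif q (Pallnz qs') (Pconst 0) else Pconst 1.

Fixpoint Tc (p : prf) (k : nat) {struct p} : prf :=
  match p with
  | PZero => Pconst 1
  | PSucc => if k is 0 then Pconst 2 else C1 PSucc (C1 PSucc (PProj 0))
  | PProj i => if i < k then C1 PSucc (PProj i) else Pconst 1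
  | PComp f gs =>
      Pif (Pallnz (map (fun g => Tc g k) gs))
          (PComp (Tc f (size gs)) (rcons (map Opred (map (fun g => Tc g k) gs)) (PProj k)))
          (Pconst 0)
  | PRec f g => if k is k'.+1 then
        PRec (Tc f k') (Pif (PProj 1)
           (PComp (Tc g k.+1) [:: PProj 0, Opred (PProj 1) & map PProj (iota 2 k)])
           (Pconst 0))
      else Pconst 0
  | PMu f => Opred (PComp (PRec (Pconst 0) (Pif (PProj 1) (PProj 1)
         (Pif (PComp (Tc f k.+1) (PProj 0 :: map PProj (iota 2 k.+1)))
              (Pif (Opred (PComp (Tc f k.+1) (PProj 0 :: map PProj (iota 2 k.+1))))
                   (Pconst 0) (Oadd (PProj 0) (Pconst 2)))
              (Pconst 1))))
         (PProj k :: map PProj (iota 0 k.+1)))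
  end.

Fixpoint allP (P : prf -> Prop) (gs : seq prf) : Prop :=
  if gs is g :: gs' then P g /\ allP P gs' else True.

Section Ind.
Variable P : prf -> Prop.
Hypothesis H0 : P PZero.
Hypothesis HS : P PSucc.
Hypothesis HP : forall i, P (PProj i).
Hypothesis HC : forall f gs, P f -> allP P gs -> P (PComp f gs).
Hypothesis HR : forall f g, P f -> P g -> P (PRec f g).
Hypothesis HM : forall f, P f -> P (PMu f).
Fixpoint prf_ind' (p : prf) : P p :=
  match p with
  | PZero => H0 | PSucc => HS | PProj i => HP i
  | PComp f gs => HC (prf_ind' f)
      ((fix A gs : allP P gs := match gs with [::] => I | g :: gs' => conj (prf_ind' g) (A gs') end) gs)
  | PRec f g => HR (prf_ind' f) (prf_ind' g)
  | PMu f => HM (prf_ind' f)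
  end.
End Ind.

Lemma map_nth_iota2 a b l : [seq nth 0 [:: a, b & l] j | j <- iota 2 (size l)] = l.
Proof.
rewrite -[2]addn0 iotaDl -map_comp.
rewrite (eq_map (g := nth 0 l)) //; exact: mkseq_nth.
Qed.

Lemma map_nth_iota2' a b l n : size l = n -> [seq nth 0 [:: a, b & l] j | j <- iota 2 n] = l.
Proof. by move=> <-; exact: map_nth_iota2. Qed.
Lemma map_nth_iota0' l n : size l = n -> [seq nth 0 l j | j <- iota 0 n] = l.
Proof. by move=> <-; exact: mkseq_nth. Qed.

Lemma map_nth_iota0 l : [seq nth 0 l j | j <- iota 0 (size l)] = l.
Proof. exact: mkseq_nth. Qed.

Lemma evals_inv0 xs vs : evals [::] xs vs -> vs = [::].
Proof. by move=> H; inversion H. Qed.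
Lemma evals_invS q qs xs vs : evals (q :: qs) xs vs ->
  exists v vs', [/\ vs = v :: vs', eval q xs v & evals qs xs vs'].
Proof. by move=> H; inversion H; subst; exists y, ys. Qed.

Lemma eval_Pallnz qs xs vs : evals qs xs vs -> eval (Pallnz qs) xs (allnz vs).
Proof.
elim: qs vs => [|q qs IH] vs H.
  by rewrite (evals_inv0 H); exact: eval_const.
have [v [vs' [-> Hq Hqs]]] := evals_invS H.
exact: eval_if Hq (IH _ Hqs) (eval_const _ _).
Qed.

Lemma evals_map_Opred qs xs vs : evals qs xs vs -> evals (map Opred qs) xs (map predn vs).
Proof.
elim: qs vs => [|q qs IH] vs H.
  by rewrite (evals_inv0 H); exact: esNil.
have [v [vs' [-> Hq Hqs]]] := evals_invS H.
exact: esCons (eval_Opred Hq) (IH _ Hqs).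
Qed.

Lemma evals_rcons qs xs vs q v : evals qs xs vs -> eval q xs v ->
  evals (rcons qs q) xs (rcons vs v).
Proof.
elim: qs vs => [|q' qs IH] vs H Hq.
  by rewrite (evals_inv0 H); exact: esCons Hq (esNil _).
have [v' [vs' [-> Hq' Hqs]]] := evals_invS H.
exact: esCons Hq' (IH _ Hqs Hq).
Qed.

Lemma muiter_prec v n : muiter v n = prec 0 (fun i st => if st is 0 then
   (if v i is 0 then 1 else if (v i).-1 is 0 then i.+2 else 0) else st) n.
Proof. by elim: n => //= n ->. Qed.

Lemma T_ok p : forall k s xs, size xs = k -> eval (Tc p k) (rcons xs s) (Fc p s xs).
Proof.
elim/prf_ind': p => [||i|f gs IHf IHgs|f g IHf IHg|f IHf] k s xs Hk /=.
- exact: (eval_const 1).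
- case: k Hk => [|k] Hk.
    by case: xs Hk => // _; apply: eval_const.
  case: xs Hk => // x xs _ /=.
  apply: evalC1; first exact: evalC1 (eval_proj (erefl _)) (eSucc _).
  exact: eSucc.
- case: ifP => Hi.
    apply: evalC1 (eProj _ _) _; apply: eval_succ.
    by rewrite /= nth_rcons Hk Hi.
  apply: eval_eq (eval_const _ _) _; congr S; rewrite nth_default //.
  by rewrite Hk leqNgt Hi.
- have Hgs : evals (map (fun g => Tc g k) gs) (rcons xs s) (map (fun g => Fc g s xs) gs).
    elim: gs IHgs {IHf} => [|g gs IH] /=; first by move=> _; exact: esNil.
    by case=> Hg Hgs; exact: esCons (Hg _ _ _ Hk) (IH Hgs).
  apply: eval_eq (eval_if (eval_Pallnz Hgs) _ (eval_const 0 _)) _; last first.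
    by case: (allnz _).
  apply: eComp (evals_rcons (evals_map_Opred Hgs) (eval_proj (erefl _))) _.
  rewrite nth_rcons Hk ltnn eqxx.
  by apply: IHf; rewrite !size_map.
- case: k Hk => [|k] Hk.
    by case: xs Hk => // _; apply: eval_const.
  case: xs Hk => // n xs [Hk] /=.
  apply: eval_rec; first exact: IHf.
  move=> i r; apply: eval_eq (eval_if (eval_proj (erefl _)) _ (eval_const 0 _)) _; last first.
    by case: r.
  apply: (eComp _ (IHg k.+2 s [:: i, r.-1 & xs] _)); last by rewrite /= Hk.
  apply: esCons; first exact: eProj.
  apply: esCons; first exact: eval_Opred (eProj _ _).
  have := evals_map_proj (iota 2 k.+1) [:: i, r & rcons xs s].
  by rewrite map_nth_iota2' // size_rcons Hk.
- apply: eval_Opred.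
  set hs := (fun i st => if st is 0 then
       (if Fc f s (i :: xs) is 0 then 1 else if (Fc f s (i :: xs)).-1 is 0 then i.+2 else 0)
     else st).
  have Hm : muiter (fun z => Fc f s (z :: xs)) s = prec 0 hs s.
    exact: muiter_prec.
  rewrite Hm.
  apply: eComp; last first.
    apply: (@eval_rec _ _ _ 0 hs); first exact: eval_const.
    move=> i st.
    have HV : eval (PComp (Tc f k.+1) (PProj 0 :: map PProj (iota 2 k.+1)))
               [:: i, st & rcons xs s] (Fc f s (i :: xs)).
      apply: (eComp _ (IHf k.+1 s (i :: xs) _)); last by rewrite /= Hk.
      apply: esCons; first exact: eProj.
      have := evals_map_proj (iota 2 k.+1) [:: i, st & rcons xs s].
      by rewrite map_nth_iota2' // size_rcons Hk.
    apply: eval_eq (eval_if (eval_proj (erefl _)) (eval_proj (erefl _))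
      (eval_if HV (eval_if (eval_Opred HV) (eval_const 0 _)
         (eval_Oadd (eval_proj (erefl _)) (eval_const 2 _))) (eval_const 1 _))) _.
    by rewrite /hs /= addn2.
  apply: esCons; first by apply: eval_proj; rewrite nth_rcons Hk ltnn eqxx.
  have := evals_map_proj (iota 0 k.+1) (rcons xs s).
  by rewrite map_nth_iota0' ?size_rcons ?Hk.
Qed.

Lemma muiter_zero v n : muiter v n = 0 -> forall z, z < n -> 1 < v z.
Proof.
elim: n => [|n IH] //= H z.
move: H; case E: (muiter v n) => [|m] //.
case Ev: (v n) => [|[|w]] // _.
rewrite ltnS leq_eqVlt => /orP[/eqP ->|]; first by rewrite Ev.
exact: IH.
Qed.

Lemma muiter_zero' v n : (forall z, z < n -> 1 < v z) -> muiter v n = 0.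
Proof.
elim: n => [|n IH] //= H.
rewrite IH; last by move=> z hz; apply: H; apply: ltnW.
by have := H n (ltnSn n); case: (v n) => [|[|w]].
Qed.

Lemma muiter_spec v n z : muiter v n = z.+2 ->
  [/\ z < n, v z = 1 & forall z', z' < z -> 1 < v z'].
Proof.
elim: n => [|n IH] //=.
case E: (muiter v n) => [|m]; last first.
  by move=> H; rewrite H in E; have [? ? ?] := IH E; split => //; apply: ltnW.
case Ev: (v n) => [|[|w]] //= [<-]; split => //.
exact: muiter_zero E.
Qed.

Lemma muiter_found v n z : z < n -> v z = 1 -> (forall z', z' < z -> 1 < v z') ->
  muiter v n = z.+2.
Proof.
elim: n => [|n IH] //= Hz Hv Hlt.
move: Hz; rewrite ltnS leq_eqVlt => /orP[/eqP Ez|Hz].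
  by rewrite -Ez (muiter_zero' Hlt) Hv.
by rewrite IH.
Qed.

Lemma allnz_map_pred vs : allnz vs != 0 -> map S (map predn vs) = vs.
Proof. by elim: vs => [|[|v] vs IH] //= H; rewrite IH. Qed.

Lemma F_sound p : forall s xs y, Fc p s xs = y.+1 -> eval p xs y.
Proof.
elim/prf_ind': p => [||i|f gs IHf IHgs|f g IHf IHg|f IHf] s xs y /=.
- by case=> <-; constructor.
- by case=> <-; constructor.
- by case=> <-; constructor.
- case E: (allnz _) => [|m] // Hf.
  apply: eComp (IHf _ _ _ Hf).
  have : map S (map predn (map (fun g => Fc g s xs) gs)) = map (fun g => Fc g s xs) gs.
    by apply: allnz_map_pred; rewrite E.
  elim: gs IHgs {E Hf} => [|g gs IH] /=; first by move=> _ _; exact: esNil.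
  case=> Hg Hgs [Eg Egs]; apply: esCons (IH Hgs Egs).
  by apply: Hg; rewrite Eg.
- case: xs => [|n xs] //.
  elim: n y => [|n IH] y /=; first by move=> H; constructor; apply: IHf H.
  case E: (prec _ _ n) => [|r] // Hg.
  exact: eRecS (IH _ E) (IHg _ _ _ Hg).
- case E: (muiter _ _) => [|[|z]] // [Ez]; subst z.
  have [_ H1 H2] := muiter_spec E.
  constructor; first exact: IHf H1.
  move=> z hz; have := H2 z hz.
  case Ev: (Fc f s (z :: xs)) => [|[|w]] // _.
  by exists w; apply: IHf Ev.
Qed.

Lemma F_mono p : forall s s' xs, s <= s' -> Fc p s xs != 0 -> Fc p s' xs = Fc p s xs.
Proof.
elim/prf_ind': p => [||i|f gs IHf IHgs|f g IHf IHg|f IHf] s s' xs Hs //=.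
- case E: (allnz _) => [|m] // Hf.
  have Hm : map (fun g => Fc g s' xs) gs = map (fun g => Fc g s xs) gs.
    have : allnz (map (fun g => Fc g s xs) gs) != 0 by rewrite E.
    elim: gs IHgs {E Hf} => [|g gs IH] //= [Hg Hgs].
    case Eg: (Fc g s xs) => [|v] //= H.
    by rewrite (Hg s s' xs Hs) ?Eg // (IH Hgs H).
  by rewrite Hm E (IHf s s' _ Hs) // Hf.
- case: xs => [|n xs] //.
  elim: n => [|n IH] /=; first by apply: IHf.
  case E: (prec _ _ n) => [|r] //= Hg.
  rewrite IH ?E //=.
  exact: IHg.
- case E: (muiter _ _) => [|[|z]] // _.
  have [H0 H1 H2] := muiter_spec E.
  rewrite (@muiter_found _ _ z) //.
  + exact: leq_trans H0 Hs.
  + by rewrite (IHf s s' _ Hs) ?H1.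
  + move=> z' hz'; have := H2 z' hz'.
    by case Ev: (Fc f s (z' :: xs)) => [|v] // Hv; rewrite (IHf s s' _ Hs) ?Ev.
Qed.

Lemma F_mono' p s s' xs y : s <= s' -> Fc p s xs = y.+1 -> Fc p s' xs = y.+1.
Proof. by move=> Hs H; rewrite (F_mono Hs) ?H. Qed.

Lemma fin_choice (P : nat -> nat -> Prop) y :
  (forall z s s', s <= s' -> P z s -> P z s') ->
  (forall z, z < y -> exists s, P z s) -> exists s, forall z, z < y -> P z s.
Proof.
move=> Hm; elim: y => [|y IH] H; first by exists 0.
have [s1 H1] := IH (fun z hz => H z (ltnW hz)).
have [s2 H2] := H y (ltnSn y).
exists (maxn s1 s2) => z; rewrite ltnS leq_eqVlt => /orP[/eqP ->|hz].
  exact: Hm (leq_maxr _ _) H2.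
exact: Hm (leq_maxl _ _) (H1 _ hz).
Qed.

Unset Implicit Arguments.
Section EI.
Variables (P : prf -> seq nat -> nat -> Prop) (Ps : seq prf -> seq nat -> seq nat -> Prop).
Hypothesis HZ : forall xs, P PZero xs 0.
Hypothesis HS : forall xs, P PSucc xs (nth 0 xs 0).+1.
Hypothesis HP : forall i xs, P (PProj i) xs (nth 0 xs i).
Hypothesis HC : forall f gs xs ys y, evals gs xs ys -> Ps gs xs ys -> eval f ys y -> P f ys y ->
  P (PComp f gs) xs y.
Hypothesis HR0 : forall f g xs y, eval f xs y -> P f xs y -> P (PRec f g) (0 :: xs) y.
Hypothesis HRS : forall f g n xs r y,
    eval (PRec f g) (n :: xs) r -> P (PRec f g) (n :: xs) r ->
    eval g (n :: r :: xs) y -> P g (n :: r :: xs) y -> P (PRec f g) (n.+1 :: xs) y.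
Hypothesis HM : forall f xs y, eval f (y :: xs) 0 -> P f (y :: xs) 0 ->
  (forall z, z < y -> exists v, eval f (z :: xs) v.+1 /\ P f (z :: xs) v.+1) ->
  P (PMu f) xs y.
Hypothesis HN : forall xs, Ps nil xs nil.
Hypothesis HCons : forall g gs xs y ys, eval g xs y -> P g xs y -> evals gs xs ys -> Ps gs xs ys ->
  Ps (g :: gs) xs (y :: ys).

Fixpoint eval_ind' p xs y (H : eval p xs y) {struct H} : P p xs y :=
  match H in eval p xs y return P p xs y with
  | eZero xs => HZ xs
  | eSucc xs => HS xs
  | eProj i xs => HP i xs
  | eComp f gs xs ys y H1 H2 => HC f gs xs ys y H1 (evals_ind' _ _ _ H1) H2 (eval_ind' _ _ _ H2)
  | eRec0 f g xs y H1 => HR0 f g xs y H1 (eval_ind' _ _ _ H1)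
  | eRecS f g n xs r y H1 H2 => HRS f g n xs r y H1 (eval_ind' _ _ _ H1) H2 (eval_ind' _ _ _ H2)
  | eMu f xs y H1 H2 => HM f xs y H1 (eval_ind' _ _ _ H1)
      (fun z hz => match H2 z hz with ex_intro v Hv => ex_intro _ v (conj (A:=eval f (z :: xs) v.+1) Hv (eval_ind' _ _ _ Hv)) end)
  end
with evals_ind' gs xs ys (H : evals gs xs ys) {struct H} : Ps gs xs ys :=
  match H in evals gs xs ys return Ps gs xs ys with
  | esNil xs => HN xs
  | esCons g gs xs y ys H1 H2 => HCons g gs xs y ys H1 (eval_ind' _ _ _ H1) H2 (evals_ind' _ _ _ H2)
  end.
End EI.
Set Implicit Arguments.

Lemma F_complete p xs y : eval p xs y -> exists s, Fc p s xs = y.+1.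
Proof.
move=> H; apply: (eval_ind' (fun p xs y => exists s, Fc p s xs = y.+1) (fun gs xs ys =>
  exists s, map (fun g => Fc g s xs) gs = map S ys)) H => {p xs y}.
  + by move=> xs; exists 0.
  + by move=> xs; exists 0.
  + by move=> i xs; exists 0.
  + move=> f gs xs ys y Hgs [s1 E1] Hf [s2 E2].
    exists (maxn s1 s2) => /=.
    have -> : map (fun g => Fc g (maxn s1 s2) xs) gs = map S ys.
      rewrite -E1; elim: gs ys E1 {Hgs Hf E2} => [|g gs IH] [|v vs] //= [Eg Egs].
      by rewrite (F_mono' (leq_maxl _ _) Eg) Eg (IH _ Egs).
    have -> : allnz (map S ys) = 1 by clear; elim: ys.
    have -> : map predn (map S ys) = ys by clear; elim: ys => //= v vs ->.
    exact: F_mono' (leq_maxr _ _) E2.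
  + move=> f g xs y Hf [s E].
    by exists s.
  + move=> f g n xs r y Hr [s1 E1] Hg [s2 E2].
    exists (maxn s1 s2).
    have E1' := F_mono' (leq_maxl s1 s2) E1.
    move: E1' => /= ->.
    exact: F_mono' (leq_maxr _ _) E2.
  + move=> f xs y Hy [s0 E0] Hz.
    have [s1 E1] : exists s, forall z, z < y -> 1 < Fc f s (z :: xs).
      have := @fin_choice (fun z s => 1 < Fc f s (z :: xs)) y.
      apply.
        move=> z s s' Hs; case E: (Fc f s (z :: xs)) => [|v] // Hv.
        by rewrite (F_mono' Hs E).
      move=> z hz; have [v [Hv [s Es]]] := Hz z hz.
      by exists s; rewrite Es.
    exists (maxn (maxn s0 s1) y.+1) => /=.
    rewrite (@muiter_found _ _ y) //.
    * by rewrite leq_max ltnSn orbT.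
    * by rewrite (F_mono' _ E0) // leq_max leq_max leqnn.
    * move=> z hz; have := E1 z hz.
      case Ev: (Fc f s1 (z :: xs)) => [|v] // Hv.
      by rewrite (F_mono' _ Ev) // leq_max leq_max leqnn orbT.
  + by move=> xs; exists 0.
  + move=> g gs xs y ys Hg [s1 E1] Hgs [s2 E2].
    exists (maxn s1 s2) => /=.
    rewrite (F_mono' (leq_maxl _ _) E1); congr cons.
    rewrite -E2; elim: gs ys E2 {Hgs} => [|g' gs IH] [|v vs] //= [Eg Egs].
    by rewrite (F_mono' (leq_maxr _ _) Eg) Eg (IH _ Egs).
Qed.

Section Prog.
Variables (p : prf) (N a K : nat).

Definition halt s x : bool := Fc p s [:: x] != 0.
Definition hb s x := if Fc p s [:: x] is 0 then 0 else 1.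
Lemma hbE s x : hb s x = halt s x.
Proof. by rewrite /hb /halt; case: (Fc p s [:: x]). Qed.

Definition cnt s m := prec 0 (fun i r => r + hb s i) m.
Definition gd s m := if N - m is 0 then (if a * m - K * cnt s m is 0 then 1 else 0) else 1.
Definition pr x s := prec 1 (fun m r => r * gd s m) (K * x.+1).+1.
Definition Qv x s := if pr x s is 0 then 1 else 0.

Definition Tp := Tc p 1.
Lemma eval_Tp x s : eval Tp [:: x; s] (Fc p s [:: x]).
Proof. exact: (@T_ok p 1 s [:: x] (erefl _)). Qed.

Definition Pcnt := PRec (Pconst 0) (Oadd (PProj 1) (Osg (PComp Tp [:: PProj 0; PProj 2]))).
Lemma eval_cnt m s l : eval Pcnt [:: m, s & l] (cnt s m).
Proof.
apply: eval_rec; first exact: eval_const.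
move=> i r; apply: eval_Oadd; first exact: eProj.
apply: eval_Osg; apply: eComp (eval_Tp i s).
by apply: esCons; [exact: eProj|apply: esCons; [exact: eProj|exact: esNil]].
Qed.

Definition Pgd := Pif (Osub (Pconst N) (PProj 0)) (Pconst 1)
  (Oisz (Osub (Omul (Pconst a) (PProj 0)) (Omul (Pconst K) (PComp Pcnt [:: PProj 0; PProj 1])))).
Lemma eval_gd m s l : eval Pgd [:: m, s & l] (gd s m).
Proof.
apply: eval_if.
- exact: eval_Osub (eval_const _ _) (eProj _ _).
- exact: eval_const.
- apply: eval_Oisz; apply: eval_Osub; first exact: eval_Omul (eval_const _ _) (eProj _ _).
  apply: eval_Omul (eval_const _ _) _.
  apply: eComp (eval_cnt m s [::]).
  by apply: esCons; [exact: eProj|apply: esCons; [exact: eProj|exact: esNil]].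
Qed.

Definition Ppr := PRec (Pconst 1) (Omul (PProj 1) (PComp Pgd [:: PProj 0; PProj 2])).
Lemma eval_pr n s l : eval Ppr [:: n, s & l] (prec 1 (fun m r => r * gd s m) n).
Proof.
apply: eval_rec; first exact: eval_const.
move=> i r; apply: eval_Omul; first exact: eProj.
apply: eComp (eval_gd i s [::]).
by apply: esCons; [exact: eProj|apply: esCons; [exact: eProj|exact: esNil]].
Qed.

Definition PQ := Oisz (PComp Ppr [:: Oadd (Omul (Pconst K) (C1 PSucc (PProj 1))) (Pconst 1); PProj 0]).
Lemma eval_Q s x l : eval PQ [:: s, x & l] (Qv x s).
Proof.
apply: eval_Oisz; apply: eComp (eval_pr _ s [::]).
apply: esCons; last by apply: esCons; [exact: eProj|exact: esNil].
apply: eval_eq (eval_Oadd (eval_Omul (eval_const K _) (evalC1 (eProj 1 _) (eSucc _))) (eval_const 1 _)) _.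
by rewrite addn1.
Qed.

Variable t : nat -> nat.
Hypothesis tP : forall x, pr x (t x) != 0.
Hypothesis tmin : forall x s, pr x s != 0 -> t x <= s.

Definition PB := Osg (PComp Tp [:: PProj 0; PComp (PMu PQ) [:: PProj 0]]).
Lemma eval_B x : eval PB [:: x] (halt (t x) x).
Proof.
rewrite -hbE; apply: eval_Osg; apply: eComp (eval_Tp x (t x)).
apply: esCons; first exact: eProj.
apply: esCons; last exact: esNil.
apply: eComp; first by apply: esCons; [exact: eProj|exact: esNil].
constructor.
  by apply: eval_eq (eval_Q _ _ _) _; rewrite /Qv; move: (tP x); case: (pr _ _).
move=> z hz; exists 0; apply: eval_eq (eval_Q _ _ _) _.
rewrite /Qv; case E: (pr x z) => [|v] //.
have := @tmin x z; rewrite E => /(_ isT) H; by rewrite ltnNge H in hz.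
Qed.
End Prog.

Section Math.
Variables (p : prf) (N a K : nat) (Ab : nat -> bool).
Hypothesis HA : forall n, Ab n <-> exists y, eval p [:: n] y.
Hypothesis HK : 0 < K.
Hypothesis HN : forall m, N <= m -> a * m <= K * \sum_(0 <= i < m) Ab i.

Lemma halt_sound s x : halt p s x -> Ab x.
Proof.
rewrite /halt; case E: (Fc p s [:: x]) => [|y] // _.
by apply/HA; exists y; apply: F_sound E.
Qed.

Lemma halt_mono s s' x : s <= s' -> halt p s x -> halt p s' x.
Proof. by rewrite /halt => Hs H; rewrite (F_mono Hs H). Qed.

Lemma halt_complete x : Ab x -> exists s, halt p s x.
Proof.
move/HA=> [y /F_complete [s Hs]]; exists s; by rewrite /halt Hs.
Qed.

Lemma cnt_sum s m : cnt p s m = \sum_(0 <= i < m) halt p s i.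
Proof. elim: m => [|m IH]; first by rewrite big_geq. by rewrite big_nat_recr //= -IH -hbE. Qed.

Lemma prec_prod (g : nat -> nat) n :
  (prec 1 (fun m r => r * g m) n != 0) = [forall m : 'I_n, g m != 0].
Proof.
elim: n => [|n IH] /=; first by apply/esym/forallP => -[].
rewrite muln_eq0 negb_or IH; apply/andP/forallP.
  move=> [/forallP H1 H2] [m hm] /=; move: (hm); rewrite ltnS leq_eqVlt => /orP[/eqP ->//|hm'].
  exact: (H1 (Ordinal hm')).
move=> H; split; last exact: (H ord_max).
by apply/forallP => -[m hm]; have := H (Ordinal (ltnW hm : m < n.+1)); apply.
Qed.

Lemma gdE s m : (gd p N a K s m != 0) = (m < N) || (a * m <= K * cnt p s m).
Proof.
rewrite /gd; case: (ltnP m N) => Hm.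
  by rewrite (_ : N - m = (N - m).-1.+1) // prednK // subn_gt0.
move: (Hm); rewrite -subn_eq0 => /eqP ->.
by rewrite -subn_eq0; case: (a * m - _).
Qed.

Lemma pr_iff x s : (pr p N a K x s != 0) <->
  (forall m, N <= m -> m <= K * x.+1 -> a * m <= K * cnt p s m).
Proof.
rewrite /pr prec_prod; split.
  move=> /forallP H m Hm1 Hm2.
  have := H (Ordinal (m:=m) (n:=(K * x.+1).+1) Hm2).
  by rewrite gdE /= ltnNge Hm1.
move=> H; apply/forallP => -[m hm] /=; rewrite gdE.
case: (ltnP m N) => //= Hm; exact: H.
Qed.

Lemma exP x : exists s, pr p N a K x s != 0.
Proof.
set M := (K * x.+1).+1.
have [S HS] : exists S, forall i, i < M -> Ab i -> halt p S i.
  have := @fin_choice (fun i S => Ab i -> halt p S i) M.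
  apply.
    by move=> z s s' Hs H1 H2; apply: halt_mono Hs (H1 H2).
  move=> z _; case Hz: (Ab z); last by exists 0.
  by have [s Hs] := halt_complete Hz; exists s.
exists S; apply/pr_iff => m Hm1 Hm2.
rewrite cnt_sum.
have -> : \sum_(0 <= i < m) halt p S i = \sum_(0 <= i < m) Ab i.
  rewrite !big_nat; apply: eq_bigr => i /andP[_ hi].
  case Ei: (Ab i).
    by rewrite HS //; apply: (leq_trans hi); exact: leqW Hm2.
  by case Eh: (halt p S i) => //; rewrite (halt_sound Eh) in Ei.
exact: HN.
Qed.

Lemma pr_down x s : pr p N a K x.+1 s != 0 -> pr p N a K x s != 0.
Proof.
move=> /pr_iff H; apply/pr_iff => m H1 H2; apply: H H1 (leq_trans H2 _).
by rewrite leq_mul2l ltnW ?orbT.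
Qed.

Definition tfun x := ex_minn (exP x).
Lemma tP x : pr p N a K x (tfun x) != 0.
Proof. by rewrite /tfun; case: ex_minnP. Qed.
Lemma tmin x s : pr p N a K x s != 0 -> tfun x <= s.
Proof. by rewrite /tfun; case: ex_minnP => m _ H /H. Qed.

Lemma pr_downn x y s : x <= y -> pr p N a K y s != 0 -> pr p N a K x s != 0.
Proof.
elim: y => [|y IH]; first by rewrite leqn0 => /eqP ->.
rewrite leq_eqVlt => /orP[/eqP -> //|]; rewrite ltnS => Hxy H.
exact: IH Hxy (pr_down H).
Qed.

Lemma t_mono x y : x <= y -> tfun x <= tfun y.
Proof. by move=> Hxy; apply: tmin; apply: pr_downn Hxy (tP y). Qed.

Lemma densityB m : N <= m -> a * m <= m + K * \sum_(0 <= i < m) halt p (tfun i) i.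
Proof.
move=> Hm.
set j := m %/ K.
have Hj : m <= K * j.+1 by rewrite mulnC ltnW // ltn_ceil.
have H1 := (proj1 (pr_iff j (tfun j)) (tP j) m Hm Hj).
apply: (leq_trans H1).
have Hjm : j <= m by rewrite leq_div.
rewrite cnt_sum (@big_cat_nat _ _ _ j 0 m _ _ (leq0n j) Hjm) /= mulnDr.
apply: leq_add.
  have Hs : \sum_(0 <= i < j) halt p (tfun j) i <= j.
    apply: (@leq_trans (\sum_(0 <= i < j) 1)); first by apply: leq_sum => i _; exact: leq_b1.
    by rewrite sum_nat_const_nat muln1 subn0.
  apply: (@leq_trans (K * j)); first by rewrite leq_mul2l Hs orbT.
  by rewrite mulnC leq_divM.
rewrite leq_mul2l; apply/orP; right.
rewrite [X in _ <= X](@big_cat_nat _ _ _ j 0 m _ _ (leq0n j) Hjm) /=.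
apply: leq_trans (leq_addl _ _).
rewrite !big_nat; apply: leq_sum => i /andP[hji _].
case Eh: (halt p (tfun j) i) => //.
by rewrite (halt_mono (t_mono hji) Eh).
Qed.
End Math.

Section Einf.
Variable R : realType.
Local Open Scope ereal_scope.

Lemma einf_eq (u : (\bar R)^nat) : limn_einf u = ereal_sup (range (einfs u)).
Proof. by rewrite limn_einf_lim; apply/cvg_lim => //; exact: cvg_einfs_sup. Qed.

Lemma einf_gt (u : (\bar R)^nat) x : x < limn_einf u ->
  exists n, forall k, (n <= k)%N -> x < u k.
Proof.
rewrite einf_eq => /ereal_sup_gt [_ [n _ <-] Hx]; exists n => k hk.
apply: (lt_le_trans Hx); apply: ereal_inf_lbound; by exists k.
Qed.

Lemma einf_ge (u : (\bar R)^nat) c n : (forall k, (n <= k)%N -> c <= u k) ->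
  c <= limn_einf u.
Proof.
move=> H; rewrite einf_eq; apply: (@le_trans _ _ (einfs u n)); last first.
  by apply: ereal_sup_ubound; exists n.
by apply: le_ereal_inf_tmp => _ [k hk <-]; apply: H.
Qed.
End Einf.

From mathcomp Require Import lra.
Local Open Scope classical_set_scope.
Local Open Scope ring_scope.

Definition cntS (S : set nat) n := (\sum_(0 <= i < n) (`[< S i >] : nat))%N.

Lemma rhoE (R : realType) S n : rho R S n = (cntS S n)%:R / n%:R.
Proof. by rewrite /rho /cntS natr_sum. Qed.

Lemma cntS_le S n : (cntS S n <= n)%N.
Proof.
apply: (@leq_trans (\sum_(0 <= i < n) 1)%N); first by apply: leq_sum => i _; exact: leq_b1.
by rewrite sum_nat_const_nat muln1 subn0.
Qed.

Lemma rho_ge0 (R : realType) S n : 0 <= rho R S n.+1.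
Proof. by rewrite rhoE divr_ge0. Qed.

Lemma rho_le1 (R : realType) S n : rho R S n.+1 <= 1.
Proof. by rewrite rhoE ler_pdivrMr ?ltr0Sn // mul1r ler_nat cntS_le. Qed.

Lemma ld_ge0 (R : realType) S : (0 <= lower_density R S)%E.
Proof. by apply: (@einf_ge _ _ _ 0) => k _; rewrite lee_fin rho_ge0. Qed.

Theorem mainTheorem7 (R : realType) (A : set nat) (eps : R) :
  ce_set A -> 0 < eps ->
  exists B : set nat,
    [/\ B `<=` A, computable_set B &
        (lower_density R A - eps%:E < lower_density R B)%E].
Proof.
move=> [p Hp] eps0.
have dle1 : (lower_density R A <= 1)%E.
  rewrite leNgt; apply/negP => /einf_gt [n Hn].
  by have := Hn n (leqnn n); rewrite lte_fin ltNge rho_le1.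
have dge0 := ld_ge0 R A.
case Ed: (lower_density R A) dle1 dge0 => [r| |] //; rewrite ?lee_fin => r1 r0.
rewrite -EFinB.
case: (ltP r eps) => Hre.
  exists set0; split => //.
    exists PZero => n; rewrite asboolF //; exact: eZero.
  by apply: lt_le_trans (ld_ge0 R set0); rewrite lte_fin subr_lt0.
pose Ab := fun i => `[< A i >].
have HA : forall n, Ab n <-> exists y, eval p [:: n] y.
  by move=> n; rewrite -Hp; split => /asboolP.
set K := (Num.truncn (3 / eps)).+1.
have HK : (0 < K)%N by [].
have K0 : 0 < K%:R :> R by rewrite ltr0n.
have HK3 : 3 < K%:R * eps.
  by rewrite -ltr_pdivrMr // truncnS_gt.
set tr := Num.truncn (K%:R * r).
have Htr : (2 < tr)%N.
  rewrite truncn_gt_nat; apply: ltW; apply: (lt_le_trans HK3).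
  by rewrite ler_pM2l.
have tr1 : tr%:R <= K%:R * r by rewrite truncn_le mulr_ge0.
have tr2 : K%:R * r < tr.+1%:R by rewrite truncnS_gt.
set a := tr.-1.
have Ea : tr%:R = a%:R + 1 :> R by rewrite /a natr1 prednK // (ltn_trans _ Htr).
have ha1 : (a%:R / K%:R < r).
  by rewrite ltr_pdivrMr //; rewrite Ea in tr1; rewrite mulrC; lra.
have ha2 : r - eps < (a%:R - 1) / K%:R.
  rewrite ltr_pdivlMr // mulrBl.
  move: tr2; rewrite -natr1 Ea => tr2.
  have : K%:R * r < a%:R + 2 by lra.
  move=> h; rewrite [r * _]mulrC [eps * _]mulrC; lra.
have Hlt : ((a%:R / K%:R)%:E < limn_einf (fun n => (rho R A n.+1)%:E))%E.
  by rewrite -/(lower_density R A) Ed lte_fin.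
have [n0 Hn0] := einf_gt Hlt.
set N := n0.+1.
have HN : forall m, (N <= m)%N -> (a * m <= K * \sum_(0 <= i < m) Ab i)%N.
  case=> // k; rewrite ltnS => hk.
  have := Hn0 k hk; rewrite lte_fin rhoE ltr_pdivrMr // mulrC mulrA ltr_pdivlMr //.
  rewrite -!natrM ltr_nat => /ltnW.
  by rewrite mulnC [(K * _)%N]mulnC.
pose tf := tfun HA HN.
pose B : set nat := fun x => halt p (tf x) x.
exists B; split.
- by move=> x Hx; apply/asboolP; exact: (halt_sound HA Hx).
- exists (PB p N a K) => n.
  apply: (eval_eq (eval_B (tP HA HN) (tmin HA HN) n)).
  by rewrite /B asboolb; case: (halt _ _ _).
- apply: (lt_le_trans (_ : _ < ((a%:R - 1) / K%:R)%:E)%E); first by rewrite lte_fin.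
  apply: (@einf_ge _ _ _ N) => k hk; rewrite lee_fin rhoE ler_pdivlMr //.
  have := densityB HA HK HN (m := k.+1) (leqW hk).
  have -> : (\sum_(0 <= i < k.+1) halt p (tfun HA HN i) i)%N = cntS B k.+1.
    by rewrite /cntS; apply: eq_bigr => i _; rewrite /B asboolb.
  rewrite -(ler_nat R) natrD !natrM => h.
  rewrite -(@ler_pM2r _ K%:R) // mulrAC divfK ?lt0r_neq0 //; lra.
Qed.
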